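(* Let $m>n>0$ be relatively prime integers with $(m,n)\neq(2,1)$, and $(r,s)\in\mathbb{Z}^2$. Then $(r,s)=\beta(m,n)$ if and only if $(-s,\,r+2s)=\beta(2m-n,\,m)$.
   Context: For relatively prime integers $a>b>0$, $\beta(a,b)$ denotes the Bézout coefficients given by the Euclidean algorithm: with $a=q_1b+r_1$, $b=q_2r_1+r_2$, $\dots$, $r_{k-2}=q_kr_{k-1}+r_k$, $r_{k-1}=1$, $r_k=0$ ($r_{-1}=a$, $r_0=b$), write $\begin{pmatrix}a\\ b\end{pmatrix}=M\begin{pmatrix}1\\0\end{pmatrix}$ with $M=\prod_{i=1}^k\begin{pmatrix}q_i&1\\1&0\end{pmatrix}$; then $\beta(a,b)$ is the first row of $M^{-1}$, and $\beta(a,b)=(r,s)$ satisfies $ra+sb=1$. *)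

(* Defs.v *)
From HB Require Import structures.
From mathcomp Require Import all_boot all_order all_algebra.
Set Implicit Arguments. Unset Strict Implicit. Unset Printing Implicit Defensive.
Import Order.TTheory GRing.Theory Num.Theory.
Local Open Scope ring_scope.

(* Quotients q_1, ..., q_k of the Euclidean algorithm on (a, b):
   a = q_1 b + r_1, b = q_2 r_1 + r_2, ..., stopping when the remainder is 0.
   The fuel argument [b] suffices since the second argument strictly decreases. *)
Fixpoint euclid_quots_fuel (fuel a b : nat) : seq nat :=
  match fuel with
  | 0%N => [::]
  | f.+1 => if b == 0%N then [::] else (a %/ b)%N :: euclid_quots_fuel f b (a %% b)
  end.

Definition euclid_quots (a b : nat) : seq nat := euclid_quots_fuel b a b.

Definition qmat (q : int) : 'M[int]_2 :=
  \matrix_(i < 2, j < 2)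
    if (i == 0) && (j == 0) then q
    else if (i == 0) || (j == 0) then 1 else 0.

Definition euclid_mat (a b : nat) : 'M[int]_2 :=
  \prod_(q <- euclid_quots a b) qmat q%:Z.

Definition beta (a b : nat) : int * int :=
  let Mi := invmx (euclid_mat a b) in (Mi 0 0, Mi 0 1).

(* Main.v *)
Require Import Defs.
From HB Require Import structures.
From mathcomp Require Import all_boot all_order all_algebra.
From mathcomp Require Import zify ring.
Import Order.TTheory GRing.Theory Num.Theory.
Local Open Scope ring_scope.

Lemma fuel_indep f g a b : (b <= f)%N -> (b <= g)%N ->
  euclid_quots_fuel f a b = euclid_quots_fuel g a b.
Proof.
elim: f g a b => [|f IH] g a b /=.
  rewrite leqn0 => /eqP -> _; by case: g.
case: g => [|g]; first by rewrite leqn0 => _ /eqP ->.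
move=> hf hg /=; case: eqP => // /eqP b0; congr (_ :: _).
have hb : (0 < b)%N by rewrite lt0n.
apply: IH; have := ltn_pmod a hb; lia.
Qed.

Lemma quots_eq a b : (0 < b)%N ->
  euclid_quots a b = (a %/ b)%N :: euclid_quots b (a %% b).
Proof.
move=> hb; rewrite /euclid_quots; case: b hb => // b _ /=.
congr (_ :: _); apply: fuel_indep => //.
have := ltn_pmod a (ltn0Sn b); lia.
Qed.

Lemma mat_eq a b : (0 < b)%N ->
  euclid_mat a b = qmat (a %/ b)%N *m euclid_mat b (a %% b).
Proof. by move=> hb; rewrite /euclid_mat quots_eq // big_cons mulmxE. Qed.

Definition P : 'M[int]_2 := \matrix_(i < 2, j < 2)
  if (i == 0) && (j == 0) then 2 else if (i == 0) then -1 else if j == 0 then 1 else 0.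
Definition Pi : 'M[int]_2 := \matrix_(i < 2, j < 2)
  if (i == 0) && (j == 0) then 0 else if (i == 0) then 1 else if j == 0 then -1 else 2.
Definition Qi (q : int) : 'M[int]_2 := \matrix_(i < 2, j < 2)
  if (i == 0) && (j == 0) then 0 else if (i == 0) then 1 else if j == 0 then 1 else -q.

Ltac mx2 := apply/matrixP; case=> [[|[|//]] ?]; case=> [[|[|//]] ?];
  repeat rewrite ?mxE ?big_ord_recl ?big_ord0 /=.

Lemma PPi : P *m Pi = 1%:M.
Proof. mx2; ring. Qed.

Lemma QQi q : qmat q *m Qi q = 1%:M.
Proof. mx2; ring. Qed.

Lemma caseA (q : nat) : qmat 1 *m qmat 1 *m qmat q = P *m qmat (1 + q)%N.
Proof. rewrite PoszD; mx2; ring. Qed.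

Lemma caseB (q : nat) : qmat 1 *m qmat (1 + q)%N = P *m qmat 1 *m qmat q.
Proof. rewrite PoszD; mx2; ring. Qed.

Lemma mat_unit a b : euclid_mat a b \in unitmx.
Proof.
rewrite /euclid_mat; apply: (big_ind (fun A : 'M[int]_2 => A \in unitmx)).
- exact: unitmx1.
- by move=> x y hx hy; rewrite -mulmxE unitmx_mul hx hy.
- by move=> q _; case: (mulmx1_unit (QQi q)).
Qed.

Lemma key m n : (0 < n)%N -> (n < m)%N -> coprime m n -> (m, n) <> (2%N, 1%N) ->
  euclid_mat (2 * m - n) m = P *m euclid_mat m n.
Proof.
move=> hn hnm hc hne.
have hm : (0 < m)%N by lia.
rewrite mat_eq //.
have -> : ((2 * m - n) %/ m = 1)%N.
  by rewrite (_ : 2 * m - n = 1 * m + (m - n))%N ?divnMDl ?divn_small //; lia.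
have -> : ((2 * m - n) %% m = m - n)%N.
  by rewrite (_ : 2 * m - n = 1 * m + (m - n))%N ?modnMDl ?modn_small //; lia.
have hmn : (0 < m - n)%N by lia.
have [hA|hB|hE] := ltngtP (2 * n) m.
- rewrite mat_eq //.
  have -> : (m %/ (m - n) = 1)%N.
    by rewrite {1}(_ : m = 1 * (m - n) + n)%N ?divnMDl ?divn_small //; lia.
  have -> : (m %% (m - n) = n)%N.
    by rewrite {1}(_ : m = 1 * (m - n) + n)%N ?modnMDl ?modn_small //; lia.
  rewrite mat_eq // [in RHS]mat_eq //.
  have -> : (m %/ n = 1 + (m - n) %/ n)%N.
    by rewrite {1}(_ : m = 1 * n + (m - n))%N ?divnMDl //; lia.
  have -> : (m %% n = (m - n) %% n)%N.
    by rewrite {1}(_ : m = 1 * n + (m - n))%N ?modnMDl //; lia.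
  by rewrite !mulmxA caseA.
- rewrite mat_eq //.
  have -> : (m %/ (m - n) = 1 + n %/ (m - n))%N.
    by rewrite {1}(_ : m = 1 * (m - n) + n)%N ?divnMDl //; lia.
  have -> : (m %% (m - n) = n %% (m - n))%N.
    by rewrite {1}(_ : m = 1 * (m - n) + n)%N ?modnMDl //; lia.
  rewrite [in RHS]mat_eq //.
  have -> : (m %/ n = 1)%N.
    by rewrite {1}(_ : m = 1 * n + (m - n))%N ?divnMDl ?divn_small //; lia.
  have -> : (m %% n = m - n)%N.
    by rewrite {1}(_ : m = 1 * n + (m - n))%N ?modnMDl ?modn_small //; lia.
  rewrite [in RHS](mat_eq n) //.
  by rewrite !mulmxA caseB.
- exfalso; move: hc; rewrite -hE /coprime => /eqP hg.
  have : (n %| gcdn (2 * n) n)%N by rewrite dvdn_gcd dvdnn andbT; exact: dvdn_mull (dvdnn n).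
  rewrite hg dvdn1 => /eqP n1; apply: hne; congr pair => //; lia.
Qed.

Lemma inv_key (M : 'M[int]_2) : M \in unitmx -> invmx (P *m M) = invmx M *m Pi.
Proof.
move=> hM.
have hP : P \in unitmx by case: (mulmx1_unit PPi).
have hPM : P *m M \in unitmx by rewrite unitmx_mul hP hM.
have e : (P *m M) *m (invmx M *m Pi) = 1%:M.
  by rewrite mulmxA -(mulmxA P) mulmxV // mulmx1 PPi.
by rewrite -[RHS]mul1mx -(mulVmx hPM) -mulmxA e mulmx1.
Qed.

Theorem lemma2p7 (m n : nat) (r s : int) :
  (0 < n)%N -> (n < m)%N -> coprime m n -> (m, n) <> (2%N, 1%N) ->
  beta m n = (r, s) <-> beta (2 * m - n)%N m = (- s, r + 2 * s).
Proof.
move=> hn hnm hc hne.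
rewrite /beta key // inv_key ?mat_unit //.
set B := invmx (euclid_mat m n).
rewrite !mxE !big_ord_recl !big_ord0 !mxE /=.
rewrite (_ : lift ord0 ord0 = 1 :> 'I_2); last exact: val_inj.
try (rewrite (_ : ord0 = 0 :> 'I_2); last exact: val_inj).
split.
- case=> -> ->; congr pair; ring.
- case=> h1 h2; congr pair; lia.
Qed.
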